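(* Let $N\ge 2$, let $\rho_1,\dots,\rho_N$ be two-qubit density operators, $\rho_k$ acting on qubits $((k-1)_2,k_1)$, and let $\rho_{\mathrm{in}}=\bigotimes_{k=1}^N\rho_k$. Let $\mathcal P$ be any swap-and-correct protocol for the chain, with induced non-postselected swapping channel $\Lambda_{\mathcal P}$, and let $\mathcal B_{[N]}(\rho_{\mathrm{in}})=\bigotimes_{k=1}^N\mathcal B(\rho_k)$ (each $\mathcal B$ acting on the two qubits of $\rho_k$). Then $$\mathcal B\big(\Lambda_{\mathcal P}(\rho_{\mathrm{in}})\big)=\Lambda_{\mathcal P}\big(\mathcal B_{[N]}(\rho_{\mathrm{in}})\big)=\Lambda_{\mathrm{seq}}\big(\mathcal B_{[N]}(\rho_{\mathrm{in}})\big),$$ where $\mathcal B$ on the left acts on the output qubits $(0_2,N_1)$ and $\mathrm{seq}$ is the sequential swapping protocol. In particular this quantity does not depend on $\mathcal P$.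
   Context: Bell states: $|\Psi_{mn}\rangle=(I_2\otimes X^mZ^n)\tfrac{1}{\sqrt2}(|00\rangle+|11\rangle)$, $m,n\in\{0,1\}$, with $X,Y,Z$ the Pauli matrices. Bell-diagonal twirl of a two-qubit state: $\mathcal B(\rho)=\tfrac14\sum_{P\in\{I,X,Y,Z\}}(P\otimes P)\rho(P\otimes P)^\dagger$; it equals $\sum_{m,n}\langle\Psi_{mn}|\rho|\Psi_{mn}\rangle\,|\Psi_{mn}\rangle\langle\Psi_{mn}|$. Let $A=\{I,X,Z,XZ\}$. Repeater chain: nodes $0,1,\dots,N$; end node $0$ holds qubit $0_2$, end node $N$ holds qubit $N_1$, each repeater node $k\in\{1,\dots,N-1\}$ holds qubits $k_1,k_2$. A syndrome is $\vec s=(s_1,\dots,s_{N-1})\in A^{N-1}$, where $s_k=X^mZ^n$ records that the Bell-state measurement (BSM) at node $k$ on $(k_1,k_2)$ projected onto $|\Psi_{mn}\rangle_{k_1k_2}$; write $|\Psi_{s_k}\rangle$ for this state. A swap-and-correct protocol is a map $\mathcal P:A^{N-1}\to A^{N+1}$, $\vec s\mapsto(\mathcal P_0(\vec s),\dots,\mathcal P_N(\vec s))$, with $\mathcal P_k(\vec s)$ the Pauli correction applied at node $k$ (for repeater nodes, to qubit $k_1$, before its BSM), such that (A) there is a permutation $\alpha$ of $\{1,\dots,N-1\}$ (the order of the BSMs) such that for each $k$, $\mathcal P_{\alpha(k)}(\vec s)$ depends only on $s_{\alpha(1)},\dots,s_{\alpha(k-1)}$; and (B) for every syndrome $\vec s$,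 the normalised output obtained from $|\Psi_{00}\rangle\langle\Psi_{00}|^{\otimes N}$ is $|\Psi_{00}\rangle\langle\Psi_{00}|$ on $(0_2,N_1)$. For a syndrome $\vec s$ define $\Lambda_{\mathcal P,\vec s}(\rho)=\mathrm{Tr}_{\text{repeater qubits}}\big[\big(\bigotimes_{k=1}^{N-1}|\Psi_{s_k}\rangle\langle\Psi_{s_k}|_{k_1k_2}\big)C_{\vec s}\rho C_{\vec s}^\dagger\big]$, where $C_{\vec s}$ applies $\mathcal P_0(\vec s)$ to $0_2$, $\mathcal P_N(\vec s)$ to $N_1$ and $\mathcal P_k(\vec s)$ to $k_1$ for $1\le k\le N-1$; the non-postselected swapping channel is $\Lambda_{\mathcal P}=\sum_{\vec s\in A^{N-1}}\Lambda_{\mathcal P,\vec s}$, with output on qubits $(0_2,N_1)$. The sequential protocol $\mathrm{seq}$ has $\mathcal P_0(\vec s)=\mathcal P_1(\vec s)=I$ and $\mathcal P_k(\vec s)=s_{k-1}$ for $k=2,\dots,N$. *)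

(* Defs.v *)
(* Quantum states are represented concretely: an operator on
   a finite-dimensional system with computational basis T (a finType) is a
   function  T -> T -> algC  (its matrix entries), a vector is T -> algC. *)
From HB Require Import structures.
From mathcomp Require Import all_boot all_order all_algebra all_fingroup all_field.
Set Implicit Arguments. Unset Strict Implicit. Unset Printing Implicit Defensive.
Import Order.TTheory GRing.Theory Num.Theory.
Local Open Scope ring_scope.

Definition op (T : finType) := T -> T -> algC.
Definition vec (T : finType) := T -> algC.

Definition mulop {T : finType} (A B : op T) : op T :=
  fun x y => \sum_(z : T) A x z * B z y.
Definition adjop {T : finType} (A : op T) : op T := fun x y => (A y x)^*.
Definition trop {T : finType} (A : op T) : algC := \sum_(x : T) A x x.
Definition applyop {T : finType} (A : op T) (v : vec T) : vec T :=
  fun x => \sum_(y : T) A x y * v y.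
Definition proj {T : finType} (v : vec T) : op T := fun x y => v x * (v y)^*.

Definition density {T : finType} (rho : op T) : Prop :=
  [/\ forall x y, rho y x = (rho x y)^*,
      forall v : vec T, 0 <= \sum_(x : T) \sum_(y : T) (v x)^* * rho x y * v y
    & trop rho = 1].

(* single-qubit basis: bool (false = |0>, true = |1>) *)
Definition pI : op bool := fun a b => (a == b)%:R.
Definition pX : op bool := fun a b => (a != b)%:R.
Definition pY : op bool :=
  fun a b => if a == b then 0 else if a then 'i else - 'i.
Definition pZ : op bool := fun a b => (a == b)%:R * (if a then -1 else 1).

(* two-qubit basis: (first qubit, second qubit) *)
Definition B2 : finType := (bool * bool)%type.
Definition tens2 (P Q : op bool) : op B2 := fun x y => P x.1 y.1 * Q x.2 y.2.

(* the set A = {I, X, Z, XZ}: the pair (m, n) stands for X^m Z^n *)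
Definition A := (bool * bool)%type.
Definition paulA (s : A) : op bool :=
  mulop (if s.1 then pX else pI) (if s.2 then pZ else pI).

Definition phiplus : vec B2 := fun x => (x.1 == x.2)%:R / sqrtC 2.
Definition bell (s : A) : vec B2 := applyop (tens2 pI (paulA s)) phiplus.

Definition twirl (rho : op B2) : op B2 :=
  fun x y => 4%:R^-1 * \sum_(P <- [:: pI; pX; pY; pZ])
     mulop (mulop (tens2 P P) rho) (adjop (tens2 P P)) x y.

(* ---------- the repeater chain ----------
   N = n.+1 elementary links, nodes 0..N  ('I_n.+2), repeater nodes 1..N-1
   (repeater i : 'I_n is node i+1).  Link j : 'I_n.+1 (0-indexed) carries the
   qubits (j_2, (j+1)_1); a basis state of the whole chain assigns to every
   link the basis state of its two qubits. *)
Definition chain (n : nat) : finType := {ffun 'I_n.+1 -> B2}.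

Definition prodop (n : nat) (F : 'I_n.+1 -> op B2) : op (chain n) :=
  fun x y => \prod_(j : 'I_n.+1) F j (x j) (y j).

(* repeater i (node i+1): qubit (i+1)_1 is the 2nd qubit of link i,
   qubit (i+1)_2 is the 1st qubit of link i+1 *)
Definition link_left (n : nat) (i : 'I_n) : 'I_n.+1 := widen_ord (leqnSn n) i.
Definition link_right (n : nat) (i : 'I_n) : 'I_n.+1 := lift ord0 i.
Definition node_of_rep (n : nat) (i : 'I_n) : 'I_n.+2 := lift ord0 (link_left i).

Definition repq (n : nat) (x : chain n) (i : 'I_n) : B2 :=
  ((x (link_left i)).2, (x (link_right i)).1).
Definition reps (n : nat) (x : chain n) : {ffun 'I_n -> B2} := [ffun i => repq x i].
Definition outq (n : nat) (x : chain n) : B2 := ((x ord0).1, (x ord_max).2).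

Definition ptr_rep (n : nat) (M : op (chain n)) : op B2 :=
  fun a b => \sum_(x : chain n) \sum_(y : chain n)
     ((outq x == a) && (outq y == b) && (reps x == reps y))%:R * M x y.

(* syndromes and swap-and-correct protocols (as maps A^(N-1) -> A^(N+1)) *)
Definition synd (n : nat) : finType := {ffun 'I_n -> A}.
Definition protocol (n : nat) := synd n -> 'I_n.+2 -> A.

(* the correction C_s: P_0 on 0_2, P_k on k_1 for k = 1..N (k_1 = 2nd qubit of
   link k-1, N_1 for k = N); identity on the qubits k_2, k >= 1 *)
Definition corr (n : nat) (P : protocol n) (s : synd n) : op (chain n) :=
  prodop (fun j : 'I_n.+1 =>
    tens2 (if j == ord0 then paulA (P s ord0) else pI) (paulA (P s (lift ord0 j)))).

Definition bsm_proj (n : nat) (s : synd n) : op (chain n) :=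
  fun x y => (outq x == outq y)%:R *
     \prod_(i : 'I_n) proj (bell (s i)) (repq x i) (repq y i).

Definition lam_s (n : nat) (P : protocol n) (s : synd n) (rho : op (chain n)) : op B2 :=
  ptr_rep (mulop (bsm_proj s) (mulop (mulop (corr P s) rho) (adjop (corr P s)))).
Definition lam (n : nat) (P : protocol n) (rho : op (chain n)) : op B2 :=
  fun a b => \sum_(s : synd n) lam_s P s rho a b.

Definition swap_and_correct (n : nat) (P : protocol n) : Prop :=
  (exists alpha : {perm 'I_n}, forall (k : 'I_n) (s s' : synd n),
      (forall j : 'I_n, (j < k)%N -> s (alpha j) = s' (alpha j)) ->
      P s (node_of_rep (alpha k)) = P s' (node_of_rep (alpha k))) /\
  (forall s : synd n,
      let M := lam_s P s (prodop (fun _ => proj (bell (false, false)))) in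
      trop M != 0 /\ M = (fun a b => trop M * proj (bell (false, false)) a b)).

(* the sequential protocol: P_0 = P_1 = I, P_k(s) = s_{k-1} for k = 2..N
   (node k-1 is repeater k-2) *)
Definition seqP (n : nat) : protocol n :=
  fun s k => if (1 < k)%N then
               (if (insub (k.-2 : nat) : option 'I_n) is Some i then s i else (false, false))
             else (false, false).

(* Main.v *)
Require Import Defs.
From HB Require Import structures.
From mathcomp Require Import all_boot all_order all_algebra all_fingroup all_field.
From mathcomp Require Import ring.
From Stdlib Require Import FunctionalExtensionality.
Set Implicit Arguments. Unset Strict Implicit. Unset Printing Implicit Defensive.
Import Order.TTheory GRing.Theory Num.Theory.
Local Open Scope ring_scope.

Definition sg (b : bool) : algC := (-1) ^+ b.
Definition sp (p t : A) : bool := (p.1 && t.2) (+) (p.2 && t.1).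
Definition conjop {T : finType} (Q M : op T) : op T := mulop (mulop Q M) (adjop Q).

Lemma sg_add a b : sg (a (+) b) = sg a * sg b.
Proof. by case: a; case: b; rewrite /sg /=; ring. Qed.
Lemma sgK b : sg b * sg b = 1.
Proof. by case: b; rewrite /sg /=; ring. Qed.
Lemma conj_sg b : (sg b)^* = sg b.
Proof. by case: b; rewrite /sg /= ?rmorph1 ?rmorphN1 ?rmorph1. Qed.
Lemma conj_nat (b : bool) : (b%:R : algC)^* = b%:R.
Proof. by rewrite rmorph_nat. Qed.

Lemma paulA_E p a b : paulA p a b = (b == a (+) p.1)%:R * sg (p.2 && b).
Proof.
rewrite /paulA /mulop big_bool /=.
by case: p => [[] []]; case: a; case: b; rewrite /pI /pX /pZ /sg /= ?mulr0n ?mulr1n; ring.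
Qed.

Lemma pI_A : pI = paulA (false, false).
Proof.
apply: functional_extensionality => a; apply: functional_extensionality => b.
rewrite paulA_E /pI /sg /=; case: a; case: b => /=; ring.
Qed.
Lemma pX_A : pX = paulA (true, false).
Proof.
apply: functional_extensionality => a; apply: functional_extensionality => b.
rewrite paulA_E /pX /sg /=; case: a; case: b => /=; ring.
Qed.
Lemma pZ_A : pZ = paulA (false, true).
Proof.
apply: functional_extensionality => a; apply: functional_extensionality => b.
rewrite paulA_E /pZ /sg /=; case: a; case: b => /=; ring.
Qed.
Lemma pY_A : pY = fun a b => 'i * paulA (true, true) a b.
Proof.
apply: functional_extensionality => a; apply: functional_extensionality => b.
rewrite paulA_E /pY /sg /=; case: a; case: b => /=; ring.
Qed.

Lemma conj_paulA p t : conjop (paulA p) (paulA t) = fun a b => sg (sp p t) * paulA t a b.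
Proof.
apply: functional_extensionality => a; apply: functional_extensionality => b.
rewrite /conjop /mulop /adjop big_bool /= !big_bool /= !paulA_E.
rewrite !rmorphM /= !conj_nat !conj_sg.
case: p => [[] []]; case: t => [[] []]; case: a; case: b; rewrite /sg /= ?mulr0n ?mulr1n; ring.
Qed.
Lemma mulop_tens2 P Q R S : mulop (tens2 P Q) (tens2 R S) = tens2 (mulop P R) (mulop Q S).
Proof.
apply: functional_extensionality => x; apply: functional_extensionality => y.
rewrite /mulop /tens2 big_distrlr /= -(pair_bigA _ (fun a b => P x.1 a * Q x.2 b * (R a y.1 * S b y.2))) /=.
apply: eq_bigr => a _; apply: eq_bigr => b _; ring.
Qed.
Lemma adjop_tens2 P Q : adjop (tens2 P Q) = tens2 (adjop P) (adjop Q).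
Proof.
apply: functional_extensionality => x; apply: functional_extensionality => y.
by rewrite /adjop /tens2 rmorphM.
Qed.
Lemma conjop_tens2 P Q R S : conjop (tens2 P Q) (tens2 R S) = tens2 (conjop P R) (conjop Q S).
Proof. by rewrite /conjop !mulop_tens2 adjop_tens2 mulop_tens2. Qed.

Lemma mulop_prodop n (F G : 'I_n.+1 -> op B2) :
  mulop (prodop F) (prodop G) = prodop (fun j => mulop (F j) (G j)).
Proof.
apply: functional_extensionality => x; apply: functional_extensionality => y.
rewrite /mulop /prodop.
rewrite (bigA_distr_bigA (fun j b => F j (x j) b * G j b (y j))).
by apply: eq_bigr => z _; rewrite big_split.
Qed.
Lemma adjop_prodop n (F : 'I_n.+1 -> op B2) :
  adjop (prodop F) = prodop (fun j => adjop (F j)).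
Proof.
apply: functional_extensionality => x; apply: functional_extensionality => y.
by rewrite /adjop /prodop rmorph_prod.
Qed.
Lemma conjop_prodop n (F G : 'I_n.+1 -> op B2) :
  conjop (prodop F) (prodop G) = prodop (fun j => conjop (F j) (G j)).
Proof. by rewrite /conjop !mulop_prodop adjop_prodop mulop_prodop. Qed.

Lemma conjop_lin (T I : finType) (Q : op T) (w : I -> algC) (M : I -> op T) x y :
  conjop Q (fun x y => \sum_i w i * M i x y) x y = \sum_i w i * conjop Q (M i) x y.
Proof.
rewrite /conjop /mulop.
transitivity (\sum_z \sum_i \sum_z0 w i * (Q x z0 * M i z0 z) * adjop Q z y).
  apply: eq_bigr => z _; rewrite big_distrl /= exchange_big /=.
  apply: eq_bigr => z0 _; rewrite big_distrr big_distrl /=.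
  by apply: eq_bigr => i _; ring.
rewrite exchange_big; apply: eq_bigr => i _.
rewrite big_distrr; apply: eq_bigr => z _ /=.
by rewrite big_distrl big_distrr /=; apply: eq_bigr => z0 _ /=; ring.
Qed.

Definition E (tu : A * A) : op B2 := tens2 (paulA tu.1) (paulA tu.2).

Lemma conjop_scale (T : finType) (c : algC) (Q M : op T) :
  conjop (fun x y => c * Q x y) M = fun x y => (c * c^*) * conjop Q M x y.
Proof.
apply: functional_extensionality => x; apply: functional_extensionality => y.
rewrite /conjop /mulop /adjop big_distrr; apply: eq_bigr => z _ /=.
rewrite big_distrl big_distrl big_distrr /=; apply: eq_bigr => w _ /=.
rewrite rmorphM /=; ring.
Qed.

Lemma tens2_pY : tens2 pY pY = fun x y => (-1) * tens2 (paulA (true,true)) (paulA (true,true)) x y.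
Proof.
apply: functional_extensionality => x; apply: functional_extensionality => y.
rewrite /tens2 pY_A.
have : 'i * 'i = -1 :> algC by rewrite -expr2 sqrCi.
move=> h; rewrite mulrACA h; ring.
Qed.

Lemma twirl_conj (M : op B2) x y : twirl M x y =
  4%:R^-1 * \sum_(p <- [:: (false,false); (true,false); (true,true); (false,true)])
     conjop (tens2 (paulA p) (paulA p)) M x y.
Proof.
rewrite /twirl !big_cons !big_nil.
have -> : mulop (mulop (tens2 pY pY) M) (adjop (tens2 pY pY)) x y =
   conjop (tens2 (paulA (true,true)) (paulA (true,true))) M x y.
  rewrite -/(conjop _ _) tens2_pY conjop_scale rmorphN1; ring.
by rewrite pI_A pX_A pZ_A.
Qed.

Lemma twirl_E tu : twirl (E tu) = fun x y => (tu.1 == tu.2)%:R * E tu x y.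
Proof.
apply: functional_extensionality => x; apply: functional_extensionality => y.
rewrite twirl_conj /E !big_cons big_nil !conjop_tens2 !conj_paulA /tens2.
have h4 : (4%:R : algC) != 0 by rewrite pnatr_eq0.
case: tu => [[[] []] [[] []]] /=; rewrite /sp /sg /=; field => //.
all: try (field; exact: h4).
Qed.

Lemma twirl_lin (I : finType) (w : I -> algC) (M : I -> op B2) x y :
  twirl (fun x y => \sum_i w i * M i x y) x y = \sum_i w i * twirl (M i) x y.
Proof.
rewrite !twirl_conj.
under eq_bigr do rewrite conjop_lin.
rewrite exchange_big /= big_distrr /=; apply: eq_bigr => i _.
rewrite twirl_conj -big_distrr /= mulrCA; congr (_ * _).
Qed.
Lemma sum_pair (I J : finType) (F : I * J -> algC) :
  \sum_(p : I * J) F p = \sum_(i : I) \sum_(j : J) F (i, j).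
Proof. by rewrite pair_bigA; apply: eq_bigr => -[]. Qed.

Lemma sum_A (F : A -> algC) :
  \sum_(t : A) F t = F (true,true) + F (true,false) + (F (false,true) + F (false,false)).
Proof. by rewrite sum_pair !big_bool. Qed.

Lemma compl1 a' b' a b :
  \sum_(t : A) paulA t a' b' * paulA t a b = 2%:R * ((a' == a) && (b' == b))%:R.
Proof.
rewrite sum_A !paulA_E.
by case: a'; case: b'; case: a; case: b; rewrite /sg /= ?mulr0n ?mulr1n; ring.
Qed.

Lemma compl2 (x' y' x y : B2) :
  4%:R^-1 * \sum_(tu : A * A) E tu x' y' * E tu x y = ((x' == x) && (y' == y))%:R.
Proof.
rewrite sum_pair /E /tens2 /=.
transitivity (4%:R^-1 * ((\sum_(t : A) paulA t x'.1 y'.1 * paulA t x.1 y.1) *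
                        (\sum_(u : A) paulA u x'.2 y'.2 * paulA u x.2 y.2))).
  congr (_ * _); rewrite big_distrl /=; apply: eq_bigr => t _.
  rewrite big_distrr /=; apply: eq_bigr => u _; ring.
rewrite !compl1.
have h4 : (4%:R : algC) != 0 by rewrite pnatr_eq0.
case: x' y' x y => [a1 a2] [b1 b2] [c1 c2] [d1 d2] /=.
rewrite !xpair_eqE.
case: (a1 == c1); case: (b1 == d1); case: (a2 == c2); case: (b2 == d2) => /=; field => //.
Qed.

Definition coef (rho : op B2) (tu : A * A) : algC :=
  4%:R^-1 * \sum_x \sum_y E tu x y * rho x y.

Lemma decomp (rho : op B2) x y : rho x y = \sum_tu coef rho tu * E tu x y.
Proof.
rewrite /coef.
transitivity (\sum_(x' : B2) \sum_(y' : B2) rho x' y' * ((x' == x) && (y' == y))%:R).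
  rewrite (bigD1 x) //= [X in _ + X]big1 => [|x' hx]; last first.
    by apply: big1 => y' _; rewrite (negbTE hx) /= mulr0.
  rewrite addr0 (bigD1 y) //= [X in _ + X]big1 => [|y' hy]; last by rewrite (negbTE hy) andbF mulr0.
  by rewrite !eqxx /= mulr1 !addr0.
transitivity (\sum_(tu : A * A) \sum_(x' : B2) \sum_(y' : B2)
    4%:R^-1 * (E tu x' y' * rho x' y') * E tu x y).
  rewrite [RHS]exchange_big /=; apply: eq_bigr => x' _.
  rewrite [RHS]exchange_big /=; apply: eq_bigr => y' _.
  rewrite -compl2 big_distrr big_distrr /=; apply: eq_bigr => tu _; ring.
apply: eq_bigr => tu _; rewrite -mulrA big_distrl /= big_distrr /=.
apply: eq_bigr => x' _; rewrite big_distrl big_distrr /=; apply: eq_bigr => y' _; ring.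
Qed.
Definition mk n (o : B2) (r : {ffun 'I_n -> B2}) : chain n :=
  [ffun j : 'I_n.+1 => (if unlift ord0 j is Some i then (r i).2 else o.1,
                        if unlift ord_max j is Some i then (r i).1 else o.2)].

Lemma ll_lift n (i : 'I_n) : link_left i = lift ord_max i.
Proof. by apply: val_inj; rewrite /= /bump leqNgt ltn_ord. Qed.

Lemma outq_mk n o (r : {ffun 'I_n -> B2}) : outq (mk o r) = o.
Proof.
rewrite /outq /mk !ffunE.
by rewrite !unlift_none; case: o.
Qed.

Lemma repq_mk n o (r : {ffun 'I_n -> B2}) i : repq (mk o r) i = r i.
Proof.
rewrite /repq /mk !ffunE ll_lift liftK /link_right liftK; by case: (r i).
Qed.
Lemma reps_mk n o (r : {ffun 'I_n -> B2}) : reps (mk o r) = r.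
Proof. by apply/ffunP => i; rewrite ffunE repq_mk. Qed.

Lemma mkK n (x : chain n) : mk (outq x) (reps x) = x.
Proof.
apply/ffunP => j; rewrite /mk ffunE.
rewrite [RHS]surjective_pairing; congr (_, _).
  case: unliftP => [i ->|->]; last by rewrite /outq.
  by rewrite ffunE /repq /link_right.
case: unliftP => [i ->|->]; last by rewrite /outq.
by rewrite ffunE /repq ll_lift.
Qed.

Lemma sum_chain n (F : chain n -> algC) :
  \sum_(x : chain n) F x = \sum_(o : B2) \sum_(r : {ffun 'I_n -> B2}) F (mk o r).
Proof.
rewrite [RHS](pair_bigA _ (fun o r => F (mk o r))) /=.
rewrite (reindex (fun p : B2 * {ffun 'I_n -> B2} => mk p.1 p.2)) //.
exists (fun x => (outq x, reps x)) => [[o r] _|x _] /=.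
  by rewrite outq_mk reps_mk.
by rewrite mkK.
Qed.

Lemma sum_ind (T : finType) (a : T) (F : T -> algC) :
  \sum_i (i == a)%:R * F i = F a.
Proof.
rewrite (bigD1 a) //= eqxx mul1r big1 ?addr0 // => i hi.
by rewrite (negbTE hi) mul0r.
Qed.

Lemma sum_fiber n (a : B2) (F : chain n -> algC) :
  \sum_(x : chain n) (outq x == a)%:R * F x = \sum_(r : {ffun 'I_n -> B2}) F (mk a r).
Proof.
rewrite sum_chain.
under eq_bigr => o _ do under eq_bigr => r _ do rewrite outq_mk.
under eq_bigr => o _ do rewrite -big_distrr /=.
by rewrite sum_ind.
Qed.

Definition Hout n (f : {ffun 'I_n.+1 -> A * A}) (o o' : B2) : algC :=
  paulA (f ord0).1 o.1 o'.1 * paulA (f ord_max).2 o.2 o'.2.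
Definition Hrep n (f : {ffun 'I_n.+1 -> A * A}) (i : 'I_n) (r r' : B2) : algC :=
  paulA (f (link_left i)).2 r.1 r'.1 * paulA (f (link_right i)).1 r.2 r'.2.

Lemma prodE_split n (f : {ffun 'I_n.+1 -> A * A}) z y :
  prodop (fun j => E (f j)) z y =
  Hout f (outq z) (outq y) * \prod_i Hrep f i (repq z i) (repq y i).
Proof.
rewrite /prodop /E /tens2 big_split /= big_ord_recl big_ord_recr /= /Hrep /Hout big_split /=.
rewrite /repq /link_left /link_right /=; ring.
Qed.

Definition gv (s : A) (be al : A) : algC :=
  \sum_(u : B2) \sum_(v : B2) bell s u * (bell s v)^* * (paulA be v.1 u.1 * paulA al v.2 u.2).

Lemma mk_eq n (x y : chain n) b :
  ((outq y == b) && (reps y == reps x)) = (y == mk b (reps x)).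
Proof.
apply/andP/eqP => [[/eqP <- /eqP <-]|->]; first by rewrite mkK.
by rewrite outq_mk reps_mk.
Qed.

Lemma contract n (s : synd n) (f : {ffun 'I_n.+1 -> A * A}) a b :
  ptr_rep (mulop (bsm_proj s) (prodop (fun j => E (f j)))) a b =
  Hout f a b * \prod_i gv (s i) (f (link_left i)).2 (f (link_right i)).1.
Proof.
rewrite /ptr_rep.
pose G (x y : chain n) := mulop (bsm_proj s) (prodop (fun j => E (f j))) x y.
transitivity (\sum_(x : chain n) (outq x == a)%:R * G x (mk b (reps x))).
  apply: eq_bigr => x _.
  rewrite -(sum_ind (mk b (reps x)) (G x)) big_distrr; apply: eq_bigr => y _ /=.
  by rewrite [reps x == _]eq_sym -andbA mk_eq -mulnb natrM mulrA.
rewrite sum_fiber /G /mulop /bsm_proj.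
transitivity (\sum_(r : {ffun 'I_n -> B2}) \sum_(rz : {ffun 'I_n -> B2})
   \prod_(i < n) proj (bell (s i)) (r i) (rz i) * (Hout f a b * \prod_i Hrep f i (rz i) (r i))).
  apply: eq_bigr => r _.
  rewrite reps_mk (eq_bigr (fun z => (outq z == a)%:R * (\prod_i proj (bell (s i)) (r i) (repq z i) *
     (Hout f (outq z) b * \prod_i Hrep f i (repq z i) (r i))))); last first.
    move=> z _; rewrite outq_mk eq_sym prodE_split outq_mk !mulrA; congr (_ * _ * _ * _); first congr (_ * _).
      by apply: eq_bigr => i _; rewrite repq_mk.
    by apply: eq_bigr => i _; rewrite repq_mk.
  rewrite sum_fiber; apply: eq_bigr => rz _; rewrite outq_mk.
  congr (_ * (_ * _)); apply: eq_bigr => i _; by rewrite repq_mk.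
transitivity (Hout f a b * \sum_(r : {ffun 'I_n -> B2}) \sum_(rz : {ffun 'I_n -> B2})
   \prod_(i < n) (proj (bell (s i)) (r i) (rz i) * Hrep f i (rz i) (r i))).
  rewrite big_distrr; apply: eq_bigr => r _; rewrite big_distrr; apply: eq_bigr => rz _ /=.
  by rewrite [X in _ = _ * X]big_split /=; ring.
congr (_ * _); rewrite /gv.
rewrite bigA_distr_bigA /=; apply: eq_bigr => r _.
rewrite bigA_distr_bigA /=; apply: eq_bigr => rz _.
by apply: eq_bigr => i _; rewrite /proj /Hrep.
Qed.
Lemma bell_E s x : bell s x = paulA s x.2 x.1 / sqrtC 2.
Proof.
rewrite /bell /applyop /phiplus /tens2 sum_pair !big_bool /= pI_A !paulA_E.
by case: x => [[] []]; case: s => [[] []]; rewrite /sg /= ?mulr0n ?mulr1n; ring.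
Qed.

Lemma conj_paulA_entry p a b : (paulA p a b)^* = paulA p a b.
Proof. by rewrite paulA_E rmorphM /= conj_nat conj_sg. Qed.

Lemma sqrt2_conj : (sqrtC 2 : algC)^* = sqrtC 2.
Proof. by apply: geC0_conj; rewrite sqrtC_ge0 ler0n. Qed.

Lemma gsum s be al :
  \sum_(u : B2) \sum_(v : B2) paulA s u.2 u.1 * paulA s v.2 v.1 * (paulA be v.1 u.1 * paulA al v.2 u.2)
  = 2%:R * ((be == al)%:R * sg (sp s al)).
Proof.
rewrite sum_pair !big_bool /= !sum_pair !big_bool /= !paulA_E.
case: s => [[] []]; case: be => [[] []]; case: al => [[] []]; rewrite /sp /sg /= ?mulr0n ?mulr1n; ring.
Qed.

Lemma gv_E s be al : gv s be al = (be == al)%:R * sg (sp s al).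
Proof.
have h2 : (sqrtC 2 : algC) != 0 by rewrite sqrtC_eq0 pnatr_eq0.
have h22 : (sqrtC 2 : algC) * sqrtC 2 = 2%:R by rewrite -expr2 sqrtCK.
have e : gv s be al = 2%:R^-1 * \sum_(u : B2) \sum_(v : B2)
   paulA s u.2 u.1 * paulA s v.2 v.1 * (paulA be v.1 u.1 * paulA al v.2 u.2).
  rewrite /gv big_distrr; apply: eq_bigr => u _; rewrite big_distrr; apply: eq_bigr => v _ /=.
  rewrite !bell_E rmorphM fmorphV /= sqrt2_conj conj_paulA_entry.
  move: h2 h22; set t := sqrtC 2 => h2 h22; rewrite -h22; field; exact: h2.
have h2' : (2%:R : algC) != 0 by rewrite pnatr_eq0.
by rewrite e gsum; field.
Qed.
Lemma ptr_lin n (I : finType) (Pi : op (chain n)) (w : I -> algC) (M : I -> op (chain n)) a b :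
  ptr_rep (mulop Pi (fun x y => \sum_i w i * M i x y)) a b =
  \sum_i w i * ptr_rep (mulop Pi (M i)) a b.
Proof.
rewrite /ptr_rep /mulop.
transitivity (\sum_x \sum_y \sum_z \sum_i w i *
   (((outq x == a) && (outq y == b) && (reps x == reps y))%:R * (Pi x z * M i z y))).
  apply: eq_bigr => x _; apply: eq_bigr => y _; rewrite big_distrr /=.
  apply: eq_bigr => z _; rewrite big_distrr /= big_distrr /=.
  by apply: eq_bigr => i _; ring.
under eq_bigr => x _ do under eq_bigr => y _ do rewrite exchange_big.
under eq_bigr => x _ do rewrite exchange_big.
rewrite exchange_big; apply: eq_bigr => i _ /=.
rewrite big_distrr; apply: eq_bigr => x _; rewrite big_distrr; apply: eq_bigr => y _ /=.
rewrite big_distrr /= big_distrr; apply: eq_bigr => z _ /=; ring.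
Qed.

Lemma lam_s_lin n (P : protocol n) s (I : finType) (w : I -> algC) (M : I -> op (chain n)) a b :
  lam_s P s (fun x y => \sum_i w i * M i x y) a b = \sum_i w i * lam_s P s (M i) a b.
Proof.
rewrite /lam_s -/(conjop _ _).
have -> : conjop (corr P s) (fun x y => \sum_i w i * M i x y) =
          (fun x y => \sum_i w i * conjop (corr P s) (M i) x y).
  apply: functional_extensionality => x; apply: functional_extensionality => y.
  exact: conjop_lin.
exact: ptr_lin.
Qed.

Definition cA n (P : protocol n) s (j : 'I_n.+1) : A :=
  if j == ord0 then P s ord0 else (false, false).

Definition kap n (P : protocol n) (s : synd n) (f : {ffun 'I_n.+1 -> A * A}) : algC :=
  (\prod_j (sg (sp (cA P s j) (f j).1) * sg (sp (P s (lift ord0 j)) (f j).2))) *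
  \prod_i gv (s i) (f (link_left i)).2 (f (link_right i)).1.

Lemma L1 n (P : protocol n) s (f : {ffun 'I_n.+1 -> A * A}) a b :
  lam_s P s (prodop (fun j => E (f j))) a b = kap P s f * E ((f ord0).1, (f ord_max).2) a b.
Proof.
rewrite /lam_s -/(conjop _ _) /corr conjop_prodop.
have -> : (fun j : 'I_n.+1 => conjop (tens2 (if j == ord0 then paulA (P s ord0) else pI)
              (paulA (P s (lift ord0 j)))) (E (f j))) =
          (fun j => fun x y => (sg (sp (cA P s j) (f j).1) * sg (sp (P s (lift ord0 j)) (f j).2))
                               * E (f j) x y).
  apply: functional_extensionality => j.
  have -> : (if j == ord0 then paulA (P s ord0) else pI) = paulA (cA P s j).
    by rewrite /cA pI_A; case: (j == ord0).
  rewrite /E conjop_tens2 !conj_paulA.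
  apply: functional_extensionality => x; apply: functional_extensionality => y.
  rewrite /tens2; ring.
have -> : prodop (fun j => fun x y => (sg (sp (cA P s j) (f j).1) * sg (sp (P s (lift ord0 j)) (f j).2))
                               * E (f j) x y) =
          (fun x y => \sum_(i : 'I_1) (\prod_j (sg (sp (cA P s j) (f j).1) * sg (sp (P s (lift ord0 j)) (f j).2)))
                      * prodop (fun j => E (f j)) x y).
  apply: functional_extensionality => x; apply: functional_extensionality => y.
  by rewrite big_ord1 /prodop big_split.
rewrite ptr_lin big_ord1 contract /kap /Hout /E /tens2; ring.
Qed.
Definition chainok n (f : {ffun 'I_n.+1 -> A * A}) :=
  [forall i : 'I_n, (f (link_left i)).2 == (f (link_right i)).1].
Definition alldiag n (f : {ffun 'I_n.+1 -> A * A}) := [forall j, (f j).1 == (f j).2].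
Definition cstd n (f : {ffun 'I_n.+1 -> A * A}) := [forall j, f j == ((f ord0).1, (f ord0).1)].
Definition cst n (g : A) : {ffun 'I_n.+1 -> A * A} := [ffun => (g, g)].

Lemma prod_nat_bool (I : finType) (b : I -> bool) :
  \prod_i ((b i)%:R : algC) = ([forall i, b i])%:R.
Proof.
case: (boolP [forall i, b i]) => [/forallP h|hn].
  by rewrite big1 // => i _; rewrite h.
move: (hn) => /forallPn [i hi].
by rewrite (bigD1 i) //= (negbTE hi) mul0r.
Qed.

Lemma sp0 p : sp p (false, false) = false.
Proof. by case: p => [[] []]. Qed.

Lemma kap_chain n (P : protocol n) s f :
  kap P s f = (chainok f)%:R * (sg (sp (P s ord0) (f ord0).1) *
     (\prod_j sg (sp (P s (lift ord0 j)) (f j).2)) * \prod_i sg (sp (s i) (f (link_right i)).1)).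
Proof.
rewrite /kap big_split /= big_ord_recl /cA eqxx.
rewrite [X in _ * X * _]big1 => [|i _]; last first.
  have -> : (lift ord0 i == ord0) = false by apply/negbTE; rewrite eq_sym neq_lift.
  by rewrite /sg /sp.
rewrite (eq_bigr (fun i => ((f (link_left i)).2 == (f (link_right i)).1)%:R *
   sg (sp (s i) (f (link_right i)).1))); last by move=> i _; rewrite gv_E.
rewrite big_split /= prod_nat_bool /chainok; ring.
Qed.

Lemma kap_nochain n (P : protocol n) s f : ~~ chainok f -> kap P s f = 0.
Proof. by move=> h; rewrite kap_chain (negbTE h) mul0r. Qed.

Lemma cstd_cst n (f : {ffun 'I_n.+1 -> A * A}) : cstd f -> f = cst n (f ord0).1.
Proof. by move=> /forallP h; apply/ffunP => j; rewrite ffunE; apply/eqP. Qed.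

Lemma cst_props n g : [/\ cstd (cst n g), alldiag (cst n g) & chainok (cst n g)].
Proof.
split; first by apply/forallP => j; rewrite !ffunE.
  by apply/forallP => j; rewrite !ffunE.
by apply/forallP => j; rewrite !ffunE.
Qed.

Lemma diag_chain_cstd n (f : {ffun 'I_n.+1 -> A * A}) :
  alldiag f -> chainok f -> cstd f.
Proof.
move=> /forallP hd /forallP hc.
have h1 : forall m (j : 'I_n.+1), val j = m -> (f j).1 = (f ord0).1.
  elim/ltn_ind => m IH j hj.
  case: (unliftP ord0 j) hj => [i ->|->] // hj.
  have := hc i; rewrite /link_right => /eqP <-.
  have := hd (link_left i) => /eqP <-.
  by apply: (IH i) => //; rewrite -hj /= /bump /= add1n ltnSn.
apply/forallP => j; apply/eqP.
rewrite [f j]surjective_pairing (h1 _ j erefl); congr (_, _).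
by have := hd j => /eqP <-; rewrite (h1 _ j erefl).
Qed.
Definition good n (Q : protocol n) := forall s g, kap Q s (cst n g) = 1.

Lemma K_diag n (Q : protocol n) (hQ : good Q) f :
  (alldiag f)%:R * \sum_s kap Q s f = (cstd f)%:R * (#|synd n|%:R : algC).
Proof.
case: (boolP (cstd f)) => hc.
  have hf := cstd_cst hc; move: hf; set g := (f ord0).1 => hf.
  rewrite hf; have [_ -> _] := cst_props n g.
  under eq_bigr do rewrite hQ.
  by rewrite sumr_const !mul1r.
rewrite mul0r; case: (boolP (alldiag f)) => hd; last by rewrite mul0r.
case: (boolP (chainok f)) => hch.
  by move: hc; rewrite diag_chain_cstd.
by rewrite big1 ?mulr0 // => s _; rewrite kap_nochain.
Qed.

Definition xorA (p q : A) : A := (p.1 (+) q.1, p.2 (+) q.2).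
Lemma sp_xorl p q t : sp (xorA p q) t = sp p t (+) sp q t.
Proof. by case: p => [[] []]; case: q => [[] []]; case: t => [[] []]. Qed.
Lemma sp_xorr p q t : sp t (xorA p q) = sp t p (+) sp t q.
Proof. by case: p => [[] []]; case: q => [[] []]; case: t => [[] []]. Qed.
Lemma xorAK p q : xorA p (xorA p q) = q.
Proof. by case: p => [[] []]; case: q => [[] []]. Qed.
Lemma xorAK' p q : xorA (xorA p q) q = p.
Proof. by case: p => [[] []]; case: q => [[] []]. Qed.

Lemma cancel_A n (P : protocol n) (alpha : {perm 'I_n})
  (hA : forall (k : 'I_n) (s s' : synd n),
      (forall j : 'I_n, (j < k)%N -> s (alpha j) = s' (alpha j)) ->
      P s (node_of_rep (alpha k)) = P s' (node_of_rep (alpha k)))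
  (d : 'I_n -> A) i0 (h0 : d i0 != (false, false)) :
  \sum_(s : synd n) \prod_i (sg (sp (P s (node_of_rep i)) (d i)) * sg (sp (s i) (d i))) = 0.
Proof.
set F := fun s : synd n => \prod_i (sg (sp (P s (node_of_rep i)) (d i)) * sg (sp (s i) (d i))).
have [m hm hmax] : exists2 m, d (alpha m) != (false, false) &
    forall k, d (alpha k) != (false, false) -> (k <= m)%N.
  have hi0 : d (alpha ((alpha^-1)%g i0)) != (false, false) by rewrite permKV.
  case: (@arg_maxnP _ _ (fun k : 'I_n => d (alpha k) != (false, false))
     (fun k : 'I_n => nat_of_ord k) hi0) => m hm hmax.
  by exists m.
set ks := alpha m.
pose w : A := if (d ks).2 then (true, false) else (false, true).
have hw : sp w (d ks) = true.
  by move: hm; rewrite /w /ks; case: (d (alpha m)) => [[] []].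
pose tau (s : synd n) : synd n := [ffun i => if i == ks then xorA (s i) w else s i].
have tauK : involutive tau.
  move=> s; apply/ffunP => i; rewrite !ffunE.
  by case: (i == ks) => //; rewrite xorAK'.
have hP : forall s i, d i != (false, false) -> P (tau s) (node_of_rep i) = P s (node_of_rep i).
  move=> s i hi.
  have := hA ((alpha^-1)%g i) (tau s) s; rewrite permKV; apply => j hj.
  rewrite /tau ffunE; case: eqP => // e; exfalso.
  have ejm : j = m by apply: (perm_inj e).
  have := hmax ((alpha^-1)%g i); rewrite permKV => /(_ hi).
  by rewrite -ejm leqNgt hj.
have hF : forall s, F (tau s) = - F s.
  move=> s; rewrite /F (bigD1 ks) // [in RHS](bigD1 ks) //=.
  have -> : \prod_(i | i != ks) (sg (sp (P (tau s) (node_of_rep i)) (d i)) * sg (sp (tau s i) (d i))) =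
            \prod_(i | i != ks) (sg (sp (P s (node_of_rep i)) (d i)) * sg (sp (s i) (d i))).
    apply: eq_bigr => i hi; rewrite /tau ffunE (negbTE hi).
    case: (boolP (d i == (false, false))) => [/eqP ->|hd]; first by rewrite !sp0.
    by rewrite hP.
  rewrite hP // /tau ffunE eqxx sp_xorl hw sg_add /sg /=; ring.
have : \sum_s F s = - \sum_s F s.
  rewrite [LHS](reindex_inj (inv_inj tauK)) /= -sumrN.
  by apply: eq_bigr => s _; rewrite hF.
move=> /eqP; rewrite -addr_eq0 -mulr2n mulrn_eq0 /= => /eqP //.
Qed.
Lemma kap_ratio n (P : protocol n) s (f : {ffun 'I_n.+1 -> A * A}) g :
  chainok f -> (f ord0).1 = g -> (f ord_max).2 = g ->
  kap P s f = kap P s (cst n g) *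
    \prod_i (sg (sp (P s (node_of_rep i)) (xorA g (f (link_right i)).1)) *
             sg (sp (s i) (xorA g (f (link_right i)).1))).
Proof.
move=> hch h0 hm.
have [_ _ hc] := cst_props n g.
rewrite !kap_chain hch hc !ffunE /= h0 !big_ord_recr /= !ffunE /= hm.
have e : forall i, (f (link_right i)).1 = xorA g (xorA g (f (link_right i)).1).
  by move=> i; rewrite xorAK.
have e2 : forall i : 'I_n, (f (widen_ord (leqnSn n) i)).2 = (f (link_right i)).1.
  by move=> i; move/forallP: hch => /(_ i) /eqP.
set d := fun i => xorA g (f (link_right i)).1.
have E1 : \prod_(i < n) sg (sp (P s (lift ord0 (widen_ord (leqnSn n) i))) (f (widen_ord (leqnSn n) i)).2)
  = \prod_(i < n) sg (sp (P s (node_of_rep i)) g) * \prod_(i < n) sg (sp (P s (node_of_rep i)) (d i)).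
  rewrite -big_split; apply: eq_bigr => i _ /=.
  by rewrite e2 [in LHS]e sp_xorr sg_add.
have E2 : \prod_(i < n) sg (sp (s i) (f (link_right i)).1)
  = \prod_(i < n) sg (sp (s i) g) * \prod_(i < n) sg (sp (s i) (d i)).
  rewrite -big_split; apply: eq_bigr => i _ /=.
  by rewrite [in LHS]e sp_xorr sg_add.
have E3 : \prod_(i < n) sg (sp (P s (lift ord0 (widen_ord (leqnSn n) i))) (cst n g (widen_ord (leqnSn n) i)).2)
  = \prod_(i < n) sg (sp (P s (node_of_rep i)) g).
  by apply: eq_bigr => i _; rewrite ffunE.
have E4 : \prod_(i < n) sg (sp (s i) (cst n g (link_right i)).1) = \prod_(i < n) sg (sp (s i) g).
  by apply: eq_bigr => i _; rewrite ffunE.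
rewrite E1 E2 E3 E4 big_split /=; ring.
Qed.

Lemma xorA_eq0 g x : (xorA g x == (false, false)) = (x == g).
Proof. by case: g => [[] []]; case: x => [[] []]. Qed.

Lemma K_A n (P : protocol n) (hP : good P) (alpha : {perm 'I_n})
  (hA : forall (k : 'I_n) (s s' : synd n),
      (forall j : 'I_n, (j < k)%N -> s (alpha j) = s' (alpha j)) ->
      P s (node_of_rep (alpha k)) = P s' (node_of_rep (alpha k))) (f : {ffun 'I_n.+1 -> A * A}) :
  ((f ord0).1 == (f ord_max).2)%:R * \sum_s kap P s f = (cstd f)%:R * (#|synd n|%:R : algC).
Proof.
case: (boolP (cstd f)) => hc.
  have hf := cstd_cst hc; move: hf; set g := (f ord0).1 => hf.
  rewrite hf !ffunE eqxx.
  under eq_bigr do rewrite hP.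
  by rewrite sumr_const !mul1r.
rewrite mul0r; case: eqP => heq; last by rewrite mul0r.
case: (boolP (chainok f)) => hch; last first.
  by rewrite big1 ?mulr0 // => s _; rewrite kap_nochain.
set g := (f ord0).1.
have [i0 hi0] : exists i0, xorA g (f (link_right i0)).1 != (false, false).
  apply/existsP; apply: contraNT hc; rewrite negb_exists => /forallP hall.
  apply/forallP => j; apply/eqP.
  rewrite [f j]surjective_pairing; congr (_, _).
    case: (unliftP ord0 j) => [i ->|->] //.
    by have := hall i; rewrite negbK xorA_eq0 => /eqP.
  case: (unliftP ord_max j) => [i ->|->]; last by rewrite -heq.
  rewrite -ll_lift; move/forallP: hch => /(_ i) /eqP ->.
  by have := hall i; rewrite negbK xorA_eq0 => /eqP.
rewrite (eq_bigr (fun s => \prod_i (sg (sp (P s (node_of_rep i)) (xorA g (f (link_right i)).1)) *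
             sg (sp (s i) (xorA g (f (link_right i)).1))))); last first.
  by move=> s _; rewrite (kap_ratio P s hch erefl (esym heq)) hP mul1r.
by rewrite (cancel_A hA hi0) mulr0.
Qed.
Lemma prod_expand n (rho : 'I_n.+1 -> op B2) (c : 'I_n.+1 -> A * A -> algC)
  (hc : forall j x y, rho j x y = \sum_tu c j tu * E tu x y) :
  prodop rho = fun x y => \sum_(f : {ffun 'I_n.+1 -> A * A})
      (\prod_j c j (f j)) * prodop (fun j => E (f j)) x y.
Proof.
apply: functional_extensionality => x; apply: functional_extensionality => y.
rewrite /prodop.
under eq_bigr do rewrite hc.
rewrite bigA_distr_bigA /=; apply: eq_bigr => f _.
by rewrite big_split.
Qed.

Lemma lam_expand n (Q : protocol n) (rho : 'I_n.+1 -> op B2) (c : 'I_n.+1 -> A * A -> algC)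
  (hc : forall j x y, rho j x y = \sum_tu c j tu * E tu x y) a b :
  lam Q (prodop rho) a b = \sum_(f : {ffun 'I_n.+1 -> A * A})
     (\prod_j c j (f j)) * (\sum_s kap Q s f) * E ((f ord0).1, (f ord_max).2) a b.
Proof.
rewrite /lam (prod_expand hc).
under eq_bigr do rewrite lam_s_lin.
rewrite exchange_big /=; apply: eq_bigr => f _.
rewrite -mulrA big_distrl big_distrr /=; apply: eq_bigr => s _.
by rewrite L1 mulrA.
Qed.
Definition Phi := proj (bell (false, false)).
Definition cphi (tu : A * A) : algC := (tu.1 == tu.2)%:R / 4%:R.

Lemma Phi_dec x y : Phi x y = \sum_tu cphi tu * E tu x y.
Proof.
have h2 : (sqrtC 2 : algC) != 0 by rewrite sqrtC_eq0 pnatr_eq0.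
have h22 : (sqrtC 2 : algC) * sqrtC 2 = 2%:R by rewrite -expr2 sqrtCK.
have h4 : (4%:R : algC) != 0 by rewrite pnatr_eq0.
rewrite /Phi /proj !bell_E rmorphM fmorphV /= sqrt2_conj conj_paulA_entry.
rewrite sum_pair /cphi /E /tens2 /=.
rewrite (eq_bigr (fun t => (1 / 4%:R) * (paulA t x.1 y.1 * paulA t x.2 y.2))); last first.
  move=> t _; rewrite (bigD1 t) //= eqxx big1 => [|u hu]; last by rewrite eq_sym (negbTE hu) mul0r mul0r.
  by rewrite addr0 /= mulr1n; field.
rewrite sum_A !paulA_E.
have hinv : ((sqrtC 2)^-1 * (sqrtC 2)^-1 : algC) = 2%:R^-1 by rewrite -invfM h22.
have h2' : (2%:R : algC) != 0 by rewrite pnatr_eq0.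
have e : forall a b : algC, a / sqrtC 2 * (b / sqrtC 2) = 2%:R^-1 * (a * b).
  by move=> a b; rewrite -hinv; ring.
rewrite e.
case: x => [[] []]; case: y => [[] []]; rewrite /sg /= ?mulr0n ?mulr1n; field => //.
Qed.
Lemma sum_cstd n (F : {ffun 'I_n.+1 -> A * A} -> algC) (h : forall f, ~~ cstd f -> F f = 0) :
  \sum_f F f = \sum_g F (cst n g).
Proof.
rewrite (bigID (fun f => cstd f)) /= [X in _ + X]big1 ?addr0; last by move=> f hf; apply: h.
rewrite (reindex_onto (cst n) (fun f => (f ord0).1)); last first.
  by move=> f hf; rewrite -cstd_cst.
apply: eq_bigl => g; have [-> _ _] := cst_props n g.
by rewrite ffunE eqxx.
Qed.

Lemma lams_expand n (Q : protocol n) s (rho : 'I_n.+1 -> op B2) (c : 'I_n.+1 -> A * A -> algC)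
  (hc : forall j x y, rho j x y = \sum_tu c j tu * E tu x y) a b :
  lam_s Q s (prodop rho) a b = \sum_(f : {ffun 'I_n.+1 -> A * A})
     (\prod_j c j (f j)) * kap Q s f * E ((f ord0).1, (f ord_max).2) a b.
Proof.
rewrite (prod_expand hc) lam_s_lin; apply: eq_bigr => f _.
by rewrite L1 mulrA.
Qed.

Lemma kap_cst0 n (P : protocol n) s : kap P s (cst n (false, false)) = 1.
Proof.
have [_ _ hc] := cst_props n (false, false).
rewrite kap_chain hc !ffunE /= sp0 !big1 => [|i _|i _]; rewrite ?ffunE ?sp0 //; by rewrite /sg /=; ring.
Qed.

Lemma good_of_B n (P : protocol n) : swap_and_correct P -> good P.
Proof.
move=> [_ hB] s.
have [_ hM] := hB s.
move: hM; set M := lam_s P s _ => hM.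
set w : algC := (4%:R^-1) ^+ n.+1.
have hw : w != 0 by rewrite expf_neq0 // invr_eq0 pnatr_eq0.
set k := fun g => kap P s (cst n g).
have hMf : forall a b, M a b = w * \sum_g k g * E (g, g) a b.
  move=> a b; rewrite /M (lams_expand P s (c := fun _ => cphi)); last by move=> j x y; exact: Phi_dec.
  rewrite (sum_cstd (F := fun f => (\prod_j cphi (f j)) * kap P s f * E ((f ord0).1, (f ord_max).2) a b)).
    rewrite big_distrr; apply: eq_bigr => g _ /=.
    rewrite /cphi (eq_bigr (fun _ => 4%:R^-1)); last by move=> j _; rewrite ffunE eqxx mul1r.
    by rewrite prodr_const card_ord /w !ffunE /k /= mulrA.
  move=> f hf; case: (boolP (alldiag f)) => hd.
    have hch : ~~ chainok f by apply: contra hf; apply: diag_chain_cstd.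
    by rewrite kap_nochain // mulr0 mul0r.
  move: hd; rewrite /alldiag => /forallPn [j hj].
  by rewrite (bigD1 j) //= /cphi (negbTE hj) !mul0r.
have hk0 : k (false, false) = 1 by exact: kap_cst0.
have ev : forall a b, w * (\sum_g k g * E (g, g) a b) = trop M * Phi a b.
  by move=> a b; rewrite -hMf {1}hM.
have p1 := ev (false, false) (false, false).
have p2 := ev (false, false) (true, true).
have p3 := ev (false, true) (false, true).
have p4 := ev (false, true) (true, false).
move: p1 p2 p3 p4.
rewrite /Phi /proj !bell_E !sum_A /E /tens2 !paulA_E /sg /= ?mulr0n ?mulr1n.
set X := (trop M * (1 * _ / sqrtC 2 * _)).
move=> p1 p2 p3 p4.
move: p3 p4; rewrite !mul0r !mulr0 => p3 p4.
have q1 : w * (k (false, true) + k (false, false)) = X by rewrite -p1; ring.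
have q2 : w * (k (true, true) + k (true, false)) = X by rewrite -p2; ring.
have q3 : w * (k (false, false) - k (false, true)) = 0 by rewrite -p3; ring.
have q4 : w * (k (true, false) - k (true, true)) = 0 by rewrite -p4; ring.
have h01 : k (false, true) = 1.
  by move/eqP: q3; rewrite mulf_eq0 (negbTE hw) /= subr_eq0 hk0 => /eqP <-.
have h1011 : k (true, true) = k (true, false).
  by move/eqP: q4; rewrite mulf_eq0 (negbTE hw) /= subr_eq0 => /eqP ->.
have h10 : k (true, false) = 1.
  have e : k (true, true) + k (true, false) = k (false, true) + k (false, false).
    by apply: (mulfI hw); rewrite q1 q2.
  rewrite h1011 h01 hk0 in e.
  move/eqP: e; rewrite -!mulr2n -subr_eq0 -mulrnBl mulrn_eq0 /= subr_eq0 => /eqP //.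
move=> g; rewrite -/(k g); case: g => [[] []] //.
by rewrite h1011.
Qed.
Lemma seq_val n (s : synd n) (i : 'I_n) : seqP s (lift ord0 (lift ord0 i)) = s i.
Proof.
rewrite /seqP.
have -> : nat_of_ord (lift ord0 (lift ord0 i)) = i.+2 by rewrite /= /bump.
by rewrite /= valK.
Qed.

Lemma good_seq n : good (@seqP n).
Proof.
move=> s g.
have [_ _ hc] := cst_props n g.
rewrite kap_chain hc !ffunE /=.
have -> : seqP s ord0 = (false, false) by [].
rewrite big_ord_recl /=.
have -> : seqP s (lift ord0 ord0) = (false, false) by [].
rewrite (eq_bigr (fun i => sg (sp (s i) g))); last by move=> i _; rewrite ffunE seq_val.
rewrite (eq_bigr (fun i : 'I_n => sg (sp (s i) g)) (F1 := fun i => sg (sp (s i) (cst n g (link_right i)).1)));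
  last by move=> i _; rewrite ffunE.
have z : forall t, sp (false, false) t = false by [].
rewrite !z.
have hp : (\prod_i sg (sp (s i) g)) * (\prod_i sg (sp (s i) g)) = 1.
  by rewrite -big_split big1 // => i _; apply: sgK.
rewrite -[RHS]hp /sg /=; ring.
Qed.

Unset Implicit Arguments.

Theorem theorem1 (n : nat) (hN : (0 < n)%N) (rho : 'I_n.+1 -> op B2)
    (hrho : forall k, density (rho k)) (P : protocol n)
    (hP : swap_and_correct P) :
  twirl (lam P (prodop rho)) = lam P (prodop (fun k => twirl (rho k))) /\
  lam P (prodop (fun k => twirl (rho k))) = lam (@seqP n) (prodop (fun k => twirl (rho k))).
Proof.
have gP := good_of_B hP.
have gS := @good_seq n.
have [[alpha hA] _] := hP.
set c := fun j => coef (rho j).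
have hc : forall j x y, rho j x y = \sum_tu c j tu * E tu x y by move=> j x y; exact: decomp.
set ct := fun j (tu : A * A) => (tu.1 == tu.2)%:R * c j tu.
have hct : forall j x y, twirl (rho j) x y = \sum_tu ct j tu * E tu x y.
  move=> j x y.
  have -> : rho j = fun x y => \sum_tu c j tu * E tu x y.
    by apply: functional_extensionality => x'; apply: functional_extensionality => y'.
  rewrite twirl_lin; apply: eq_bigr => tu _; rewrite twirl_E /ct; ring.
have hW : forall f : {ffun 'I_n.+1 -> A * A},
    \prod_j ct j (f j) = (alldiag f)%:R * \prod_j c j (f j).
  by move=> f; rewrite /ct big_split /= prod_nat_bool.
have e2 : lam P (prodop (fun k => twirl (rho k))) = lam (@seqP n) (prodop (fun k => twirl (rho k))).
  apply: functional_extensionality => a; apply: functional_extensionality => b.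
  rewrite (lam_expand _ hct) (lam_expand _ hct); apply: eq_bigr => f _.
  rewrite hW.
  transitivity (\prod_j c j (f j) * ((alldiag f)%:R * \sum_s kap P s f) *
     E ((f ord0).1, (f ord_max).2) a b); first by ring.
  rewrite (K_diag gP) -(K_diag gS); ring.
split => //.
apply: functional_extensionality => a; apply: functional_extensionality => b.
have -> : lam P (prodop rho) = fun a b => \sum_(f : {ffun 'I_n.+1 -> A * A})
     ((\prod_j c j (f j)) * (\sum_s kap P s f)) * E ((f ord0).1, (f ord_max).2) a b.
  by apply: functional_extensionality => a'; apply: functional_extensionality => b'; exact: lam_expand.
rewrite twirl_lin (lam_expand _ hct); apply: eq_bigr => f _.
rewrite twirl_E /= hW.
have k1 := K_A gP hA f.
have k2 := K_diag gP f.
transitivity (\prod_j c j (f j) * (((f ord0).1 == (f ord_max).2)%:R * \sum_s kap P s f) *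
   E ((f ord0).1, (f ord_max).2) a b); first by ring.
rewrite k1 -k2; ring.
Qed.
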